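(* Let $m \ge 2$, $n \ge 2$, and for $1 \le i \le m$ let $f_i(x) = x^T A_i x + c_i^T x + d_i$ be quadratics on $\mathbb{R}^n$ with $A_i$ symmetric, where $f_1(x) = \|x\|^2 - 1$. For $2 \le i \le m$ let $U_i > 0$ satisfy $|f_i(x)| \le U_i$ for all $x$ with $\|x\|^2 \le 2$. Then the system $f_i(x) \le 0$, $1 \le i \le m$, is feasible if and only if the following system in the real variables $v_0, x_1,\ldots,x_n, s_1,\ldots,s_m, w_2,\ldots,w_m$ is feasible: $$x^T A_i x + c_i^T v_0 x + d_i v_0^2 + s_i^2 = 0, \quad 1 \le i \le m,$$ $$\frac{s_i^2 + w_i^2}{U_i} - v_0^2 = 0, \quad 2 \le i \le m,$$ $$\|x\|^2 + s_1^2 + \sum_{i=2}^m \frac{s_i^2 + w_i^2}{U_i} + v_0^2 = m+1.$$ *)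

(* Defs.v *)
From mathcomp Require Import all_boot all_order all_algebra.
From mathcomp Require Import reals.
Set Implicit Arguments. Unset Strict Implicit. Unset Printing Implicit Defensive.
Import Order.TTheory GRing.Theory Num.Theory.
Local Open Scope ring_scope.

Definition sqnorm (R : realType) (n : nat) (x : 'cV[R]_n) : R :=
  \sum_(k < n) x k 0 ^+ 2.

Definition quadf (R : realType) (n : nat) (A : 'M[R]_n) (x : 'cV[R]_n) : R :=
  (x^T *m A *m x) 0 0.

Definition linf (R : realType) (n : nat) (c x : 'cV[R]_n) : R :=
  (c^T *m x) 0 0.

Definition quadratic (R : realType) (n : nat) (A : 'M[R]_n) (c : 'cV[R]_n) (d : R)
  (x : 'cV[R]_n) : R := quadf A x + linf c x + d.

(* Main.v *)
Require Import Defs.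
From mathcomp Require Import all_boot all_order all_algebra.
From mathcomp Require Import reals.
From mathcomp Require Import lra.
Import Order.TTheory GRing.Theory Num.Theory.
Local Open Scope ring_scope.

Lemma trZ (R : realType) n (a : R) (x : 'cV[R]_n) : (a *: x)^T = a *: x^T.
Proof. by apply/matrixP => i j; rewrite !mxE. Qed.

Lemma quadfZ (R : realType) n (A : 'M[R]_n) (a : R) x :
  quadf A (a *: x) = a ^+ 2 * quadf A x.
Proof.
rewrite /quadf trZ -!scalemxAl -scalemxAr scalerA mxE expr2 //.
Qed.

Lemma linfZ (R : realType) n (c : 'cV[R]_n) (a : R) x :
  linf c (a *: x) = a * linf c x.
Proof. by rewrite /linf -scalemxAr mxE. Qed.

Lemma quadraticZ (R : realType) n (A : 'M[R]_n) c d (a : R) x :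
  quadratic A c d (a *: x) = a ^+ 2 * quadf A x + a * linf c x + d.
Proof. by rewrite /quadratic quadfZ linfZ. Qed.

Lemma sqnormZ (R : realType) n (a : R) (x : 'cV[R]_n) :
  sqnorm (a *: x) = a ^+ 2 * sqnorm x.
Proof.
rewrite /sqnorm mulr_sumr; apply: eq_bigr => k _; rewrite mxE exprMn //.
Qed.

Lemma sum0 (R : realType) m (F : 'I_m -> R) (h : (0 < m)%N) :
  \sum_(i < m | val i == 0%N) F i = F (Ordinal h).
Proof.
case: m F h => // m F h; rewrite big_mkcond big_ord_recl /=.
rewrite big1 ?addr0; last by move=> i _.
by congr F; apply: val_inj.
Qed.

Lemma sumpos (R : realType) m (F : 'I_m -> R) (a : R) :
  (forall i : 'I_m, (0 < val i)%N -> F i = a) ->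
  \sum_(i < m | (0 < val i)%N) F i = a *+ m.-1.
Proof.
case: m F => [|m] F hF; first by rewrite big_ord0.
rewrite big_mkcond big_ord_recl /= add0r.
rewrite (eq_bigr (fun _ => a)); last by move=> i _; rewrite hF.
by rewrite sumr_const card_ord.
Qed.

Theorem corollary1 (R : realType) (m n : nat) (hm : (2 <= m)%N) (hn : (2 <= n)%N)
  (A : 'I_m -> 'M[R]_n) (c : 'I_m -> 'cV[R]_n) (d : 'I_m -> R) (U : 'I_m -> R)
  (hsym : forall i, (A i)^T = A i)
  (hf1 : forall i : 'I_m, val i = 0%N ->
           forall x : 'cV[R]_n, quadratic (A i) (c i) (d i) x = sqnorm x - 1)
  (hU : forall i : 'I_m, (0 < val i)%N ->
          0 < U i /\
          forall x : 'cV[R]_n, sqnorm x <= 2 -> `|quadratic (A i) (c i) (d i) x| <= U i) :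
  (exists x : 'cV[R]_n, forall i, quadratic (A i) (c i) (d i) x <= 0) <->
  (exists (v0 : R) (x : 'cV[R]_n) (s w : 'I_m -> R),
      (forall i, quadf (A i) x + v0 * linf (c i) x + d i * v0 ^+ 2 + s i ^+ 2 = 0) /\
      (forall i : 'I_m, (0 < val i)%N -> (s i ^+ 2 + w i ^+ 2) / U i - v0 ^+ 2 = 0) /\
      sqnorm x + (\sum_(i < m | val i == 0%N) s i ^+ 2)
        + (\sum_(i < m | (0 < val i)%N) (s i ^+ 2 + w i ^+ 2) / U i) + v0 ^+ 2
        = m%:R + 1).
Proof.
have hm0 : (0 < m)%N by apply: leq_trans hm.
set i0 := Ordinal hm0.
have h0 : forall x, quadf (A i0) x = sqnorm x /\ linf (c i0) x = 0 /\ d i0 = -1.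
  move=> x.
  have e0 := hf1 i0 erefl (0 *: x).
  have e1 := hf1 i0 erefl (1 *: x).
  have e2 := hf1 i0 erefl ((-1) *: x).
  rewrite !quadraticZ !sqnormZ in e0 e1 e2.
  rewrite expr0n /= !mul0r !add0r in e0.
  rewrite expr1n !mul1r in e1.
  rewrite sqrrN expr1n !mul1r mulN1r in e2.
  split; [|split]; [lra|lra|lra].
have nm : m%:R = (m.-1)%:R + 1 :> R by rewrite natr1 prednK.
split.
  move=> [x hx].
  have hn1 : sqnorm x <= 1.
    have := hx i0; rewrite hf1 //; lra.
  exists 1, x, (fun i => Num.sqrt (- quadratic (A i) (c i) (d i) x)),
     (fun i => Num.sqrt (U i + quadratic (A i) (c i) (d i) x)).
  have hs : forall i, Num.sqrt (- quadratic (A i) (c i) (d i) x) ^+ 2 =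
                       - quadratic (A i) (c i) (d i) x.
    by move=> i; rewrite sqr_sqrtr // oppr_ge0.
  have hw : forall i, (0 < val i)%N ->
     Num.sqrt (U i + quadratic (A i) (c i) (d i) x) ^+ 2 = U i + quadratic (A i) (c i) (d i) x.
    move=> i hi; rewrite sqr_sqrtr //.
    have [_ hb] := hU i hi.
    have := hb x ltac:(lra); rewrite ler_norml => /andP [hb1 _]; lra.
  split; [|split].
  - by move=> i; rewrite hs expr1n mul1r mulr1 /quadratic; lra.
  - move=> i hi; rewrite hs hw // expr1n.
    have [hUi _] := hU i hi.
    rewrite [_ + (_ + _)]addrC -addrA subrr addr0 divff ?subrr //; lra.
  - rewrite sum0 (@sumpos _ _ _ 1); last first.
      move=> i hi; rewrite hs hw // [_ + (_ + _)]addrC -addrA subrr addr0 divff //.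
      have [hUi _] := hU i hi; lra.
    rewrite hs hf1 // expr1n nm; lra.
move=> [v0 [x [s [w [e1 [e2 e3]]]]]].
have [q0 [l0 dd]] := h0 x.
rewrite sum0 (@sumpos _ _ _ (v0 ^+ 2)) in e3; last first.
  by move=> i hi; apply/eqP; rewrite -subr_eq0; apply/eqP; apply: e2.
have := e1 i0; rewrite q0 l0 dd => e4.
have hv : v0 ^+ 2 = 1.
  have e5 : (v0 ^+ 2 - 1) * ((m.-1)%:R + 2) = 0.
    rewrite nm -mulr_natr in e3. nra.
  move: e5 => /eqP; rewrite mulf_eq0 => /orP [/eqP|/eqP] h; first lra.
  have : 0 <= (m.-1)%:R :> R by apply: ler0n.
  lra.
exists (v0 *: x) => i.
rewrite quadraticZ hv mul1r.
have := e1 i; rewrite hv mulr1 => e6.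
have := sqr_ge0 (s i); lra.
Qed.
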